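(* For any instance of CAP with $m$ items, let $k$ be the maximum utilitarian social welfare $\sum_{i\in N}v_i(A_i)$ over all contiguous allocations $\mathbf A$. Then $k\ge\sqrt m$.
   Context: An instance of CAP consists of agents $N=[n]$ and indivisible items $M=\{g_1,\dots,g_m\}$ arranged on a path in index order; each agent $i$ has an additive valuation $v_i:2^M\to\mathbb{Z}_{\ge0}$ (nonnegative integer values), and every item $g$ satisfies $v_i(\{g\})\ge1$ for some agent $i$. An allocation $(A_1,\dots,A_n)$ is a partition of $M$ into possibly empty bundles; it is contiguous if each nonempty $A_i$ is a set of consecutive items $\{g_k,\dots,g_\ell\}$ (no order on agents is imposed). *)

(* Defs.v *)
From HB Require Import structures.
From mathcomp Require Import all_boot all_order all_algebra.
Set Implicit Arguments. Unset Strict Implicit. Unset Printing Implicit Defensive.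
Import Order.TTheory GRing.Theory Num.Theory.

(* Agents are 'I_n, items g_1..g_m are 'I_m (in path order).
   An additive valuation of agent i is given by its values on single items:
   v i g = v_i({g}) : nat. *)

Definition value (n m : nat) (v : 'I_n -> 'I_m -> nat) (i : 'I_n) (S : {set 'I_m}) : nat :=
  \sum_(g in S) v i g.

(* An allocation (partition of M into n possibly empty bundles indexed by agents)
   is represented by the map sending each item to the agent receiving it. *)
Definition bundle (n m : nat) (A : {ffun 'I_m -> 'I_n}) (i : 'I_n) : {set 'I_m} :=
  [set g | A g == i].

Definition contiguous (n m : nat) (A : {ffun 'I_m -> 'I_n}) : bool :=
  [forall i : 'I_n, forall g1 : 'I_m, forall g2 : 'I_m, forall g : 'I_m,
     ((g1 \in bundle A i) && (g2 \in bundle A i) && (g1 <= g <= g2)%N)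
       ==> (g \in bundle A i)].

Definition welfare (n m : nat) (v : 'I_n -> 'I_m -> nat) (A : {ffun 'I_m -> 'I_n}) : nat :=
  \sum_(i : 'I_n) value v i (bundle A i).

Definition maxWelfare (n m : nat) (v : 'I_n -> 'I_m -> nat) : nat :=
  \max_(A : {ffun 'I_m -> 'I_n} | contiguous A) welfare v A.

(* Main.v *)
Require Import Defs.
From HB Require Import structures.
From mathcomp Require Import all_boot all_order all_algebra.
Import Order.TTheory GRing.Theory Num.Theory.
Local Open Scope ring_scope.

Lemma welfareE (n m : nat) (v : 'I_n -> 'I_m -> nat) (A : {ffun 'I_m -> 'I_n}) :
  welfare v A = (\sum_g v (A g) g)%N.
Proof.
rewrite /welfare /value (partition_big A xpredT) //=.
apply: eq_bigr => i _; apply: eq_big => g; first by rewrite inE.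
by rewrite inE => /eqP ->.
Qed.

Lemma nat_main (n m : nat) (v : 'I_n -> 'I_m.+1 -> nat) (f : 'I_m.+1 -> 'I_n)
  (hf : forall g, (0 < v (f g) g)%N) :
  (m.+1 <= maxWelfare v * maxWelfare v)%N.
Proof.
set k := maxWelfare v.
have hk : forall A, contiguous A -> (welfare v A <= k)%N.
  by move=> A cA; apply: (@leq_bigmax_cond _ _ (welfare v) A).
have hcl : forall i, (#|[set g | f g == i]| <= k)%N.
  move=> i; pose A := [ffun _ : 'I_m.+1 => i].
  have cA : contiguous A.
    apply/forallP=> j; apply/forallP=> g1; apply/forallP=> g2; apply/forallP=> g.
    apply/implyP; rewrite /bundle !inE !ffunE => /andP [/andP [/eqP -> _] _].
    by [].
  apply: leq_trans (hk A cA); rewrite welfareE.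
  rewrite (bigID (fun g => f g == i)) /=; apply: leq_trans (leq_addr _ _).
  rewrite -sum1_card big_mkcond [X in (_ <= X)%N]big_mkcond /=.
  apply: leq_sum => g _; rewrite inE; case: eqP => // e.
  by rewrite ffunE -e hf.
pose P (h : 'I_m.+1) := [forall h' : 'I_m.+1, (h' < h)%N ==> (f h' != f h)].
have P0 : P ord0 by apply/forallP => h'; rewrite ltn0.
have Pinj : forall a b : 'I_m.+1, P a -> P b -> f a = f b -> a = b.
  move=> a b Pa Pb fab; apply/val_inj/eqP; case: ltngtP => // hab.
  - by move/forallP/(_ a): Pb; rewrite hab fab eqxx.
  - by move/forallP/(_ b): Pa; rewrite hab fab eqxx.
pose hg (g : 'I_m.+1) := [arg max_(h > ord0 | (h <= g)%N && P h) (h : nat)].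
have hgP : forall g, ((hg g <= g)%N && P (hg g)) /\
    forall h : 'I_m.+1, (h <= g)%N -> P h -> (h <= hg g)%N.
  move=> g; rewrite /hg; case: arg_maxnP => [|h Hh Hm]; first by rewrite P0.
  by split=> // h' h'g Ph'; apply: Hm; rewrite h'g.
have hgmono : forall g1 g2 : 'I_m.+1, (g1 <= g2)%N -> (hg g1 <= hg g2)%N.
  move=> g1 g2 le; have [/andP [a b] _] := hgP g1.
  by apply: (hgP g2).2 => //; apply: leq_trans le.
have hgfix : forall h : 'I_m.+1, P h -> hg h = h.
  move=> h Ph; apply/val_inj/eqP; rewrite eqn_leq.
  have [/andP [a _] b] := hgP h; by rewrite a b.
pose A := [ffun g => f (hg g)].
have cA : contiguous A.
  apply/forallP=> j; apply/forallP=> g1; apply/forallP=> g2; apply/forallP=> g.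
  apply/implyP; rewrite /bundle !inE !ffunE.
  move=> /andP [/andP [/eqP e1 /eqP e2] /andP [l1 l2]].
  have e : hg g1 = hg g2.
    apply: Pinj; [exact: (proj2 (andP (hgP g1).1)) | exact: (proj2 (andP (hgP g2).1))|].
    by rewrite e1 e2.
  have : hg g = hg g1.
    apply/val_inj/eqP; rewrite eqn_leq (hgmono g1 g l1) andbT e.
    exact: hgmono.
  by move=> ->; rewrite e1.
have hd : (#|[set f g | g in [set: 'I_m.+1]]| <= k)%N.
  apply: leq_trans (hk A cA).
  apply: (@leq_trans #|[set f g | g in [set h | P h]]|).
    apply: subset_leq_card; apply/subsetP => i /imsetP [g _ ->].
    pose h := [arg min_(h < g | f h == f g) (h : nat)].
    have [Ph fh] : P h /\ f h = f g.
      rewrite /h; case: arg_minnP => [//|h0 /eqP fh0 Hm]; split => //.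
      apply/forallP => h'; apply/implyP => lt; apply/negP => /eqP e.
      by have := Hm h'; rewrite e fh0 eqxx => /(_ isT); rewrite leqNgt lt.
    by apply/imsetP; exists h; rewrite ?inE.
  apply: leq_trans (leq_imset_card _ _) _.
  rewrite welfareE (bigID P) /=; apply: leq_trans (leq_addr _ _).
  rewrite -sum1_card big_mkcond [X in (_ <= X)%N]big_mkcond /=.
  apply: leq_sum => g _; rewrite inE; case Pg: (P g) => //.
  by rewrite ffunE hgfix.
have hm : (m.+1 = \sum_i #|[set g | f g == i]|)%N.
  transitivity #|'I_m.+1|; first by rewrite card_ord.
  rewrite -sum1_card (partition_big f xpredT) //=.
  apply: eq_bigr => i _; rewrite -sum1_card; apply: eq_big => g //.
  by rewrite inE.
rewrite hm; set S := [set f g | g in [set: 'I_m.+1]].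
rewrite (bigID (fun i => i \in S)) /=.
rewrite [X in (_ + X)%N]big1 ?addn0; last first.
  move=> i iS; apply/eqP; rewrite cards_eq0; apply/eqP/setP => g.
  rewrite !inE; apply/negP => /eqP e; move: iS; rewrite -e.
  by move/negP; apply; apply/imsetP; exists g.
apply: (@leq_trans (\sum_(i in S) k)%N); first by apply: leq_sum => i _; apply: hcl.
by rewrite sum_nat_const leq_mul2r hd orbT.
Qed.

Theorem mainTheorem11 (n m : nat) (v : 'I_n -> 'I_m -> nat)
  (hv : forall g : 'I_m, exists i : 'I_n, (1 <= v i g)%N)
  (R : rcfType) :
  Num.sqrt (m%:R : R) <= (maxWelfare v)%:R.
Proof.
case: m v hv => [|m] v hv; first by rewrite sqrtr0 ler0n.
have [i0 _] := hv ord0.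
pose f g := odflt i0 [pick i | (0 < v i g)%N].
have hf : forall g, (0 < v (f g) g)%N.
  move=> g; rewrite /f; case: pickP => [//|H].
  by have [i Hi] := hv g; move: (H i) => /=; rewrite Hi.
have := @nat_main _ _ _ _ hf; set k := maxWelfare v => hk.
rewrite -(@ger0_norm _ (k%:R : R)) ?ler0n // -sqrtr_sqr.
by rewrite ler_wsqrtr // -natrX ler_nat expnS expn1.
Qed.
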